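(* Let $G=(V,E)$ be a finite $d$-regular graph ($d\ge 1$) with adjacency matrix $A$, and let $\phi:V\to\mathbb{R}$ satisfy $$(d\cdot \mathrm{Id} + A)\phi = \varepsilon\phi$$ for some real $\varepsilon \neq d$. Let $m\in V$ be a vertex with $|\phi(m)|=\max_{v\in V}|\phi(v)|$. Then for every integer $k\ge 0$, $$\|\phi\|_{\ell^\infty} \le \left(\frac{d}{d-\varepsilon}\right)^{2k}\left(\sum_{j\in V}\big[(AD^{-1})^{2k}\delta_m\big](j)^2\right)^{1/2}\|\phi\|_{\ell^2}.$$
   Context: $D$ is the diagonal degree matrix (here $D=d\cdot\mathrm{Id}$), so $AD^{-1}$ is the transition matrix of the simple random walk: if $\psi$ is a probability distribution on $V$, then $AD^{-1}\psi$ is the distribution after one step to a uniformly random neighbor. $\delta_m:V\to\mathbb{R}$ is the indicator function of the vertex $m$. $\|f\|_{\ell^2}=(\sum_{v}f(v)^2)^{1/2}$ and $\|f\|_{\ell^\infty}=\max_v|f(v)|$. *)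

(* Defs.v *)
(* Vertices of the finite graph are 'I_n; functions V -> R are column vectors 'cV[R]_n. *)
From HB Require Import structures.
From mathcomp Require Import all_boot all_order all_algebra.
Set Implicit Arguments. Unset Strict Implicit. Unset Printing Implicit Defensive.
Import Order.TTheory GRing.Theory Num.Theory.
Local Open Scope ring_scope.

Definition adjmx (R : rcfType) (n : nat) (e : rel 'I_n) : 'M[R]_n :=
  \matrix_(i, j) (e i j)%:R.

Definition simple_graph (n : nat) (e : rel 'I_n) : Prop :=
  symmetric e /\ irreflexive e.

Definition regular (n : nat) (e : rel 'I_n) (d : nat) : Prop :=
  forall v : 'I_n, #|[set w | e v w]| = d.

Definition delta (R : rcfType) (n : nat) (m : 'I_n) : 'cV[R]_n :=
  \col_i (i == m)%:R.

Definition linf (R : rcfType) (n : nat) (f : 'cV[R]_n) : R :=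
  \big[Num.max/0]_(i < n) `|f i 0|.

Definition l2 (R : rcfType) (n : nat) (f : 'cV[R]_n) : R :=
  Num.sqrt (\sum_(i < n) f i 0 ^+ 2).

(* Main.v *)
Require Import Defs.
From HB Require Import structures.
From mathcomp Require Import all_boot all_order all_algebra.
From mathcomp Require Import ring lra.
Import Order.TTheory GRing.Theory Num.Theory.
Local Open Scope ring_scope.

Lemma cs_sq (R : realFieldType) (n : nat) (a b : 'I_n -> R) :
  (\sum_i a i * b i) ^+ 2 <= (\sum_i a i ^+ 2) * (\sum_i b i ^+ 2).
Proof.
have H0 : 0 <= \sum_i \sum_j (a i * b j - a j * b i) ^+ 2.
  by apply: sumr_ge0 => i _; apply: sumr_ge0 => j _; exact: sqr_ge0.
have E : \sum_i \sum_j (a i * b j - a j * b i) ^+ 2 =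
   2 * ((\sum_i a i ^+ 2) * (\sum_i b i ^+ 2)) - 2 * (\sum_i a i * b i) ^+ 2.
  have E1 : forall i j, (a i * b j - a j * b i) ^+ 2 =
     a i ^+ 2 * b j ^+ 2 + b i ^+ 2 * a j ^+ 2 - 2 * ((a i * b i) * (a j * b j)).
    by move=> i j; ring.
  under eq_bigr do under eq_bigr do rewrite E1.
  under eq_bigr do rewrite sumrB big_split /=.
  rewrite sumrB big_split /=.
  under [X in _ - X]eq_bigr do rewrite -mulr_sumr.
  rewrite -mulr_sumr -!big_distrlr /= expr2.
  rewrite [X in X + _ - _]mulrC; ring.
have : 0 <= 2 * ((\sum_i a i ^+ 2) * (\sum_i b i ^+ 2) - (\sum_i a i * b i) ^+ 2).
  by rewrite mulrBr -E.
by rewrite pmulr_rge0 // subr_ge0.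
Qed.

Lemma cs_abs (R : rcfType) (n : nat) (a b : 'I_n -> R) :
  `|\sum_i a i * b i| <= Num.sqrt (\sum_i a i ^+ 2) * Num.sqrt (\sum_i b i ^+ 2).
Proof.
rewrite -sqrtr_sqr -sqrtrM; last by apply: sumr_ge0 => i _; exact: sqr_ge0.
exact/ler_wsqrtr/cs_sq.
Qed.

Theorem theorem2 (R : rcfType) (n : nat) (e : rel 'I_n) (d : nat)
  (Hsimple : simple_graph e) (Hreg : regular e d) (Hd : (1 <= d)%N)
  (phi : 'cV[R]_n) (eps : R)
  (Heig : ((d%:R)%:M + adjmx R e) *m phi = eps *: phi)
  (Hne : eps != d%:R)
  (m : 'I_n) (Hm : `|phi m 0| = linf phi)
  (k : nat) :
  linf phi <=
    (d%:R / (d%:R - eps)) ^+ (2 * k)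
    * l2 (((d%:R)^-1 *: adjmx R e) ^+ (2 * k) *m delta R m)
    * l2 phi.
Proof.
set A := adjmx R e.
set P := (d%:R)^-1 *: A.
have d0 : (d%:R : R) != 0 by rewrite pnatr_eq0 -lt0n.
have de0 : (d%:R - eps : R) != 0 by rewrite subr_eq0 eq_sym.
set c := (eps - d%:R) / d%:R.
have HA : A *m phi = (eps - d%:R) *: phi.
  move: Heig; rewrite mulmxDl mul_scalar_mx => H.
  by rewrite scalerBl -H addrAC subrr add0r.
have HP : P *m phi = c *: phi by rewrite /P -scalemxAl HA scalerA mulrC.
have Hpow : forall j, P ^+ j *m phi = c ^+ j *: phi.
  elim=> [|j IH]; first by rewrite expr0 mul1mx scale1r.
  by rewrite exprS -mulmxE -mulmxA IH -scalemxAr HP scalerA -exprSr.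
have AT : A^T = A.
  case: Hsimple => Hs _.
  by apply/matrixP => i j; rewrite !mxE Hs.
have PT : P^T = P.
  apply/matrixP => i j; rewrite !mxE; congr (_ * _).
  by case: Hsimple => Hs _; rewrite Hs.
have PjT : forall j, (P ^+ j)^T = P ^+ j.
  elim=> [|j IH]; first by rewrite expr0 -idmxE trmx1.
  by rewrite exprSr -mulmxE trmx_mul IH PT mulmxE -exprS exprSr.
set Q := P ^+ (2 * k).
set mu := (d%:R / (d%:R - eps)) ^+ (2 * k).
have muc : mu * c ^+ (2 * k) = 1.
  rewrite /mu -exprMn /c.
  have -> : d%:R / (d%:R - eps) * ((eps - d%:R) / d%:R) = -1 :> R.
    by field; rewrite d0 de0.
  by rewrite exprM sqrrN expr1n expr1n.
have mu0 : 0 <= mu by rewrite /mu mulnC exprM; exact: sqr_ge0.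
have Hphi : phi m 0 = mu * \sum_j Q m j * phi j 0.
  have : (mu *: (Q *m phi)) m 0 = phi m 0 by rewrite Hpow scalerA muc scale1r.
  by rewrite mxE [in X in X -> _]mxE => <-.
have HQd : forall j, (Q *m delta R m) j 0 = Q m j.
  move=> j; rewrite mxE (bigD1 m) //= big1 ?addr0.
    rewrite !mxE eqxx mulr1.
    by rewrite /Q -[in RHS]PjT mxE.
  by move=> i /negbTE Hi; rewrite mxE Hi mulr0.
rewrite -Hm Hphi normrM ger0_norm // -mulrA ler_wpM2l //.
rewrite /l2 (_ : \sum_(i < n) (Q *m delta R m) i 0 ^+ 2 = \sum_(i < n) Q m i ^+ 2); last by apply: eq_bigr => i _; rewrite HQd.
exact: cs_abs.
Qed.
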